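(* Let $\Omega$ be a compact metric space, $T:\Omega\to\Omega$ continuous with a dense orbit, $\mathcal{H}$ a complete metric space and $A:\Omega\to\mathrm{Isom}(\mathcal{H})$ continuous for the topology of uniform convergence on bounded sets. Let $F:\Omega\times\mathcal{H}\to\Omega\times\mathcal{H}$, $F(\omega,h)=(T\omega,A(\omega)\cdot h)$, and $I_T(\omega,h)=(T\omega,h)$. The following are equivalent: (P2) there exists $G:\Omega\to\mathrm{Homeo}(\mathcal{H})$, continuous for the pointwise topology, such that the map $\mathcal{G}(\omega,h)=(\omega,G(\omega)\cdot h)$ satisfies $\mathcal{G}^{-1}\circ F\circ\mathcal{G}=I_T$; (P3) for every $(\omega_0,h_0)\in\Omega\times\mathcal{H}$ there exists a continuous map $s_{\omega_0,h_0}:\Omega\to\mathcal{H}$ with $s_{\omega_0,h_0}(\omega_0)=h_0$ and $A(\omega)\cdot s_{\omega_0,h_0}(\omega)=s_{\omega_0,h_0}(T\omega)$ for all $\omega\in\Omega$, and for every $\omega_0,\omega\in\Omega$ the map $h_0\mapsto s_{\omega_0,h_0}(\omega)$ is continuous.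
   Context: Continuity of $A$ for uniform convergence on bounded sets: for every bounded $K\subset\mathcal{H}$, $\omega_0\in\Omega$, $\varepsilon>0$ there is $\delta>0$ with $d_{\mathcal{H}}(A(\omega)h,A(\omega_0)h)<\varepsilon$ for all $h\in K$ when $d_\Omega(\omega,\omega_0)<\delta$. $\mathrm{Homeo}(\mathcal{H})$ is the group of homeomorphisms of $\mathcal{H}$; $G:\Omega\to\mathrm{Homeo}(\mathcal{H})$ is continuous for the pointwise topology if $\omega\mapsto G(\omega)\cdot h$ is continuous for each $h\in\mathcal{H}$. *)

(* Defs.v *)
From HB Require Import structures.
From mathcomp Require Import all_boot all_order all_algebra.
From mathcomp Require Import all_classical all_reals all_analysis.
Set Implicit Arguments. Unset Strict Implicit. Unset Printing Implicit Defensive.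
Import Order.TTheory GRing.Theory Num.Theory.
Local Open Scope classical_set_scope.
Local Open Scope ring_scope.

Section defs.
Context {R : realType}.

Definition complete_metric (X : metricType R) : Prop :=
  forall u : nat -> X,
    (forall e : R, 0 < e -> exists N : nat, forall m n : nat,
        (N <= m)%N -> (N <= n)%N -> mdist (u m) (u n) < e) ->
    exists l : X, u @ \oo --> l.

Definition bounded_set (X : metricType R) (K : set X) : Prop :=
  exists (c : X) (r : R), forall h, K h -> mdist c h <= r.

Definition is_isometry (X : metricType R) (f : X -> X) : Prop :=
  (forall x y, mdist (f x) (f y) = mdist x y) /\ (forall y, exists x, f x = y).

Definition ucb_continuous (Om H : metricType R) (A : Om -> H -> H) : Prop :=
  forall (K : set H) (w0 : Om) (e : R), bounded_set K -> 0 < e ->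
    exists2 d : R, 0 < d & forall w : Om, mdist w w0 < d ->
      forall h, K h -> mdist (A w h) (A w0 h) < e.

Definition is_homeo_pair (X : metricType R) (f g : X -> X) : Prop :=
  continuous f /\ continuous g /\ cancel f g /\ cancel g f.

Definition has_dense_orbit (Om : metricType R) (T : Om -> Om) : Prop :=
  exists w0 : Om, dense (range (fun n : nat => iter n T w0)).

Definition skewF (Om H : Type) (T : Om -> Om) (A : Om -> H -> H)
  (p : Om * H) : Om * H := (T p.1, A p.1 p.2).

Definition I_T (Om H : Type) (T : Om -> Om) (p : Om * H) : Om * H :=
  (T p.1, p.2).

Definition fiberwise (Om H : Type) (G : Om -> H -> H) (p : Om * H) : Om * H :=
  (p.1, G p.1 p.2).

End defs.

(* Main.v *)
Require Import Defs.
From HB Require Import structures.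
From mathcomp Require Import all_boot all_order all_algebra.
From mathcomp Require Import all_classical all_reals all_analysis.
From mathcomp Require Import lra.
Import Order.TTheory GRing.Theory Num.Theory.
Local Open Scope classical_set_scope.
Local Open Scope ring_scope.

Lemma near_orbit (R : realType) (Om H : metricType R) (T : Om -> Om) (ws : Om)
  (f g : Om -> H) : dense (range (fun n : nat => iter n T ws)) ->
  continuous f -> continuous g -> forall w (e : R), 0 < e ->
  exists n, ball (f w) e (f (iter n T ws)) /\ ball (g w) e (g (iter n T ws)).
Proof.
move=> D cf cg w e e0.
pose P := [set x | ball (f w) e (f x) /\ ball (g w) e (g x)].
have nP : nbhs w P.
  have h1 : nbhs w (f @^-1` ball (f w) e) := cf w _ (nbhsx_ballx (f w) e e0).
  have h2 : nbhs w (g @^-1` ball (g w) e) := cg w _ (nbhsx_ballx (g w) e e0).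
  have h3 := filterI h1 h2.
  by apply: (filterS _ (h3 _)) => x [].
have [x [/interior_subset Px [n _ xE]]] := D (interior P) (ex_intro _ w nP) (open_interior P).
by exists n; rewrite xE.
Qed.

Lemma sec_uniq (R : realType) (Om H : metricType R) (T : Om -> Om) (ws : Om)
  (A : Om -> H -> H) (s s' : Om -> H) :
  dense (range (fun n : nat => iter n T ws)) ->
  (forall w x y, mdist (A w x) (A w y) = mdist x y) ->
  continuous s -> continuous s' ->
  (forall w, A w (s w) = s (T w)) -> (forall w, A w (s' w) = s' (T w)) ->
  forall w0, s w0 = s' w0 -> forall w, s w = s' w.
Proof.
move=> D iso cs cs' es es' w0 e0.
have orb n : mdist (s (iter n T ws)) (s' (iter n T ws)) = mdist (s ws) (s' ws).
  elim: n => [//|n IH]; by rewrite !iterS -es -es' iso.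
set c := mdist (s ws) (s' ws).
have key w e : 0 < e ->
    c < mdist (s w) (s' w) + 3 * e /\ mdist (s w) (s' w) < c + 3 * e.
  move=> ep.
  have [n [b1 b2]] := @near_orbit _ _ _ _ _ _ _ D cs cs' w e ep.
  have bd : forall d, 0 < d -> ball (s w) (mdist (s w) (s' w) + d) (s' w).
    by move=> d dp; rewrite ballEmdist /= ltrDl.
  have bo : ball (s (iter n T ws)) (c + e) (s' (iter n T ws)).
    by rewrite ballEmdist /= orb ltrDl.
  split.
    have := ball_triangle (ball_sym b1) (ball_triangle (bd e ep) b2).
    rewrite /c ballEmdist /= orb; lra.
  have := ball_triangle b1 (ball_triangle bo (ball_sym b2)).
  rewrite /c ballEmdist /=; lra.
have eq w : mdist (s w) (s' w) = c.
  apply/eqP; rewrite eq_le; apply/andP; split.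
    apply/ler_addgt0Pr => e ep.
    have [_ h] := key w (e / 4) ltac:(by rewrite divr_gt0).
    lra.
  apply/ler_addgt0Pr => e ep.
  have [h _] := key w (e / 4) ltac:(by rewrite divr_gt0).
  lra.
move=> w; apply: mdist_positivity; rewrite eq -(eq w0) e0.
exact: mdistxx.
Qed.

Theorem proposition2p8 (R : realType) (Om H : metricType R)
  (T : Om -> Om) (A : Om -> H -> H) :
  compact [set: Om] ->
  continuous T ->
  has_dense_orbit T ->
  complete_metric H ->
  (forall w, is_isometry (A w)) ->
  ucb_continuous A ->
  ( (* (P2) *)
    (exists G Ginv : Om -> H -> H,
       (forall w, is_homeo_pair (G w) (Ginv w)) /\
       (forall h, continuous (fun w => G w h)) /\
       (forall p : Om * H,
          fiberwise Ginv (skewF T A (fiberwise G p)) = I_T T p))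
  <->
    (* (P3) *)
    (exists s : Om -> H -> Om -> H,
       (forall (w0 : Om) (h0 : H),
          continuous (s w0 h0) /\ s w0 h0 w0 = h0 /\
          (forall w, A w (s w0 h0 w) = s w0 h0 (T w))) /\
       (forall w0 w : Om, continuous (fun h0 => s w0 h0 w)))).

Proof.
move=> _ _ [ws D] _ isoA _; have iso w x y := (isoA w).1 x y.
split.
  move=> [G [Gi [hom [cG conj]]]].
  have eqv w h : A w (G w h) = G (T w) h.
    have := conj (w, h); rewrite /fiberwise /skewF /I_T /= => -[E].
    have [_ [_ [_ K]]] := hom (T w).
    by rewrite -[LHS]K E.
  exists (fun w0 h0 w => G w (Gi w0 h0)); split.
    move=> w0 h0; split; first exact: cG.
    split; last by move=> w; rewrite eqv.
    by have [_ [_ [_ K]]] := hom w0; rewrite K.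
  move=> w0 w.
  have [c1 _] := hom w; have [_ [c2 _]] := hom w0.
  by move=> x; apply: (continuous_comp (c2 x) (c1 _)).
move=> [s [hs cs]].
have U w0 w1 h0 h1 : s w0 h0 w1 = h1 -> forall w, s w0 h0 w = s w1 h1 w.
  move=> E; have [c0 [_ e0]] := hs w0 h0; have [c1 [x1 e1]] := hs w1 h1.
  apply: (@sec_uniq _ _ _ _ ws A _ _ D iso c0 c1 e0 e1 w1).
  by rewrite E x1.
exists (fun w h => s ws h w), (fun w h => s w h ws); split.
  move=> w; split; first exact: cs.
  split; first exact: cs.
  split.
    move=> h /=.
    rewrite -(U ws w h (s ws h w) erefl ws).
    by have [_ [-> _]] := hs ws h.
  move=> h /=.
  rewrite -(U w ws h (s w h ws) erefl w).
  by have [_ [-> _]] := hs w h.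
split; first by move=> h; have [? _] := hs ws h.
move=> [w h]; rewrite /fiberwise /skewF /I_T /=.
have [_ [x0 ->]] := hs ws h.
by rewrite -(U ws (T w) h _ erefl ws) x0.
Qed.
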